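(* Let $L>0$ and $c_0>0$. Assume: [A1] there exist constants $C_L>0$ and $\varepsilon_L\in(0,1)$ such that $P\bigl[\sup_{u\in V_T(r)}\mathbb Z_T(u)\ge \exp(-r^{2-\varepsilon_L})\bigr]\le C_L/r^L$ for all $r>0$ and all $T\in\mathbb T$; [A2] $p$ is differentiable on $\mathbb R\setminus\{0\}$; [A3] there is $\varepsilon>0$ with $\sup_{-\varepsilon<x<\varepsilon}p(x)<\infty$; [A4] for every $j\in\mathcal J^{(1)}$, $\sup_{T\in\mathbb T}|\alpha_T^j\xi_T^j|\le c_0$ almost surely. Then there exist constants $C'_L>0$ and $\varepsilon'_L\in(0,1)$ such that $$P\Bigl[\sup_{u\in V_T(r)}\mathbb Z^\dagger_T(u)\ge \exp(-r^{2-\varepsilon'_L})\Bigr]\le \frac{C'_L}{r^L}$$ for all $r>0$ and all $T\in\mathbb T$.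
   Context: Let $\Theta\subset\mathbb R^{\mathsf p}$ be a bounded open set with closure $\overline\Theta$ and let $\theta^*\in\Theta$. Let $(\Omega,\mathcal F,P)$ be a probability space and $\mathbb T\subset\mathbb R_{\ge0}$ with $\sup\mathbb T=\infty$. For each $T\in\mathbb T$, $\mathbb H_T:\Omega\times\overline\Theta\to\mathbb R$ is a random field such that $\theta\mapsto\mathbb H_T(\theta)$ is continuous for every $\omega$. The penalty is $p_T(\theta)=\sum_{j=1}^{\mathsf p}\xi_T^j p(\theta_j)$ where $\xi_T^j>0$ are (possibly random) positive quantities and $p:\mathbb R\to\mathbb R_{\ge0}$ satisfies $p(0)=0$; put $\mathbb H^\dagger_T=\mathbb H_T-p_T$. Let $\mathcal J^{(0)}=\{j:\theta^*_j=0\}$, $\mathcal J^{(1)}=\{j:\theta^*_j\neq0\}$. Let $a_T=\mathrm{diag}(\alpha_T^1,\dots,\alpha_T^{\mathsf p})$ be a deterministic invertible diagonal matrix with $\|a_T\|\to0$ as $T\to\infty$, where $\|A\|$ is the square root of the largest eigenvalue of $A'A$. Let $\mathbb U_T=\{u\in\mathbb R^{\mathsf p}:\theta^*+a_Tu\in\overline\Theta\}$, $\mathbb Z_T(u)=\exp(\mathbb H_T(\theta^*+a_Tu)-\mathbb H_T(\theta^* ))$ and $\mathbb Z^\dagger_T(u)=\exp(\mathbb H^\dagger_T(\theta^*+a_Tu)-\mathbb H^\dagger_T(\theta^* ))$ for $u\in\mathbb U_T$, and $V_T(r)=\{u\in\mathbb U_T:|u|\ge r\}$. The supremum over the empty set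 is $-\infty$ by convention. *)

(* Defs.v *)
From HB Require Import structures.
From mathcomp Require Import all_boot all_order all_algebra.
From mathcomp Require Import all_classical all_reals all_analysis.
Set Implicit Arguments. Unset Strict Implicit. Unset Printing Implicit Defensive.
Import Order.TTheory GRing.Theory Num.Theory.
Import numFieldNormedType.Exports.
Local Open Scope classical_set_scope.
Local Open Scope ring_scope.

Section Defs.
Context {R : realType} {n : nat} {Om : Type}.

Definition eucl (u : 'rV[R]_n) : R := Num.sqrt (\sum_(i < n) (u 0 i) ^+ 2).

(* theta* + a_T u  with a_T = diag(alpha_T^1,...,alpha_T^n) *)
Definition shiftpt (thstar : 'rV[R]_n) (alpha : 'I_n -> R) (u : 'rV[R]_n)
  : 'rV[R]_n := thstar + \row_j (alpha j * u 0 j).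

Definition UT (Theta : set 'rV[R]_n) thstar alpha : set 'rV[R]_n :=
  [set u | closure Theta (shiftpt thstar alpha u)].

Definition VT Theta thstar alpha (r : R) : set 'rV[R]_n :=
  [set u | UT Theta thstar alpha u /\ r <= eucl u].

Definition penalty (p : R -> R) (xi : 'I_n -> R) (th : 'rV[R]_n) : R :=
  \sum_(j < n) xi j * p (th 0 j).

Definition Zfield (h : 'rV[R]_n -> R) thstar alpha (u : 'rV[R]_n) : R :=
  expR (h (shiftpt thstar alpha u) - h thstar).

(* the event [ sup_{u in V_T(r)} Z(u) >= exp(-r^(2-eps)) ];
   sup over the empty set is -oo, so the event is then empty *)
Definition tail_event (Z : Om -> 'rV[R]_n -> R) (V : set 'rV[R]_n)
  (r eps : R) : set Om :=
  [set w | ((expR (- r `^ (2 - eps)))%:E <=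
            ereal_sup [set (Z w u)%:E | u in V])%E].

End Defs.

(* Main.v *)
Require Import Defs.
From HB Require Import structures.
From mathcomp Require Import all_boot all_order all_algebra.
From mathcomp Require Import all_classical all_reals all_analysis.
From mathcomp Require Import ring lra.
Import Order.TTheory GRing.Theory Num.Theory.
Import numFieldNormedType.Exports.
Local Open Scope classical_set_scope.
Local Open Scope ring_scope.
Section S.
Variables (R : realType) (n : nat).
Local Notation V := 'rV[R]_n.

Lemma ballV (u v : V) e : ball u e v <-> 0 < e /\ forall j, `|u 0 j - v 0 j| < e.
Proof.
split; first by move=> [e0 h]; split=> // j; have := h 0 j.
by move=> [e0 h]; split=> // i j; rewrite (ord1 i); exact: h.
Qed.

Lemma nat_inv_lt (e : R) : 0 < e -> exists m : nat, m.+1%:R^-1 < e.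
Proof.
move=> e0; have [N _ /(_ N (leqnn _))] := near_infty_natSinv_lt (PosNum e0).
by exists N.
Qed.

Lemma rat_approx (u : V) e : 0 < e -> exists q : 'rV[rat]_n,
  forall j, `|u 0 j - ratr (q 0 j)| < e.
Proof.
move=> e0.
have h : forall j : 'I_n, exists qj : rat, `|u 0 j - ratr qj| < e.
  move=> j; have : u 0 j - e < u 0 j + e by rewrite ltrD2l gtrN.
  move=> /rat_in_itvoo[q]; rewrite in_itv /= => /andP[h1 h2].
  by exists q; rewrite ltr_distl; apply/andP; split; lra.
have [g hg] := choice h.
by exists (\row_j g j) => j; rewrite mxE.
Qed.

Lemma dense_seq (K : countType) (U : set V) (pat : V -> K) (u0 : V) :
  U u0 -> exists ds : nat -> V, (forall k, U (ds k)) /\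
   forall u, U u -> forall e, 0 < e -> exists k, pat (ds k) = pat u /\ ball u e (ds k).
Proof.
move=> Uu0.
pose ds (k : nat) : V := match (unpickle k : option ('rV[rat]_n * nat * K)%type) with
  | Some (q, m, c) => xget u0 [set v | U v /\ pat v = c /\
        ball (map_mx (@ratr R) q : V) (m.+1%:R^-1) v]
  | None => u0 end.
exists ds; split.
  move=> k; rewrite /ds; case: (unpickle k) => [[[q m] c]|] //.
  by case: xgetP => // v _ [].
move=> u Uu e e0.
have [m hm] := nat_inv_lt (e/2) (divr_gt0 e0 (ltr0n _ 2)).
have [|q hq] := rat_approx u (m.+1%:R^-1); first by rewrite invr_gt0 ltr0n.
exists (pickle (q, m, pat u)); rewrite /ds pickleK.
have : [set v | U v /\ pat v = pat u /\ ball (map_mx (@ratr R) q : V) (m.+1%:R^-1) v] u.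
  split=> //; split=> //; apply/ballV; split; first by rewrite invr_gt0 ltr0n.
  by move=> j; rewrite mxE distrC; exact: hq.
case: xgetP => [v _ [Uv [pv bv]] _|/(_ u)//]; split=> //.
apply: (@le_ball _ _ _ (m.+1%:R^-1 + m.+1%:R^-1)).
  by rewrite [e]splitr ltW // ltrD.
apply: ball_triangle bv; apply/ballV; split; first by rewrite invr_gt0 ltr0n.
by move=> j; rewrite mxE; exact: hq.
Qed.

Lemma meas_sup d (Om : measurableType d) (K : countType) (U : set V)
  (pat : V -> K) (f : Om -> V -> R) (a : R) :
  (forall u, U u -> measurable_fun setT (fun w => f w u)) ->
  (forall w u, U u -> forall e, 0 < e ->
     \forall v \near u, U v -> pat v = pat u -> `|f w u - f w v| < e) ->
  measurable [set w | (a%:E <= ereal_sup [set (f w u)%:E | u in U])%E].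
Proof.
move=> mf fc.
have [->|/set0P[u0 Uu0]] := eqVneq U set0.
  suff -> : [set w | (a%:E <= ereal_sup [set (f w u)%:E | u in set0])%E] = set0.
    exact: measurable0.
  by apply/seteqP; split => w //=; rewrite image_set0 ereal_sup0 leeNy_eq.
have [ds [Uds dsd]] := @dense_seq K U pat u0 Uu0.
suff -> : [set w | (a%:E <= ereal_sup [set (f w u)%:E | u in U])%E] =
    \bigcap_m \bigcup_k [set w | a - m.+1%:R^-1 < f w (ds k)].
  apply: bigcapT_measurable => m; apply: bigcupT_measurable => k.
  have := mf (ds k) (Uds k) measurableT _ (measurable_itv `]a - m.+1%:R^-1, +oo[).
  rewrite setTI; congr measurable; apply/seteqP; split => w /=;
    by rewrite in_itv /= andbT.
apply/seteqP; split.
- move=> w /= hw m _.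
  have eta0 : 0 < m.+1%:R^-1 :> R by rewrite invr_gt0 ltr0n.
  move: (m.+1%:R^-1) eta0 => η eta0.
  have : ((a - η / 2)%:E < ereal_sup [set (f w u)%:E | u in U])%E.
    by apply: lt_le_trans hw; rewrite lte_fin; lra.
  move=> /ereal_sup_gt[_ [u Uu <-]]; rewrite lte_fin => hu.
  have := fc w u Uu (η / 2) ltac:(lra).
  move=> /nbhs_ballP[δ /= δ0 hδ].
  have [k [pk bk]] := dsd u Uu δ δ0.
  exists k => //=; have := hδ _ bk (Uds k) pk.
  by rewrite ltr_norml => /andP[h1 h2]; lra.
- move=> w /= hw; rewrite leNgt; apply/negP => hlt.
  have ub k : ((f w (ds k))%:E <= ereal_sup [set (f w u)%:E | u in U])%E.
    by apply: ereal_sup_ubound; exists (ds k).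
  move: hlt (ub) (ub 0%N).
  case: (ereal_sup _) => [x||] //= hlt ub' _.
  rewrite lte_fin in hlt.
  have [m hm] := nat_inv_lt (a - x) ltac:(lra).
  have [k _ hk] := hw m I.
  have := ub' k; rewrite lee_fin /= => hk'.
  have := lt_le_trans hk hk'; move: hm; move: (m.+1%:R^-1) => t; lra.
Qed.
End S.
Section S.
Variables (R : realType).

Lemma two_powR_gt1 (L : R) : 0 < L -> 1 < 2 `^ L.
Proof.
move=> L0; rewrite /powR ifF; last by apply/negbTE; rewrite pnatr_eq0.
by rewrite expR_gt1 mulr_gt0 // ln_gt0 // ltr1n.
Qed.

Lemma pow_arith (C g r s : R) : 0 < g -> 0 <= C ->
  1 + (2 + 2 * C) `^ g^-1 <= r -> r <= s ->
  r `^ (1 + g) + 1 + 2 * C * s <= s `^ (1 + 2 * g).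
Proof.
move=> g0 C0 hr rs.
have X0 : 0 <= (2 + 2 * C) `^ g^-1 by exact: powR_ge0.
have r1 : 1 <= r by lra.
have s1 : 1 <= s by lra.
have s0 : 0 < s by lra.
have hX : ((2 + 2 * C) `^ g^-1) `^ g = 2 + 2 * C.
  by rewrite -powRrM mulVf ?gt_eqF // powRr1 //; lra.
have hS : 2 + 2 * C <= s `^ g.
  rewrite -hX; apply: (ge0_ler_powR (ltW g0)); rewrite ?nnegrE //; lra.
have hP : s `^ (1 + g) = s * s `^ g.
  rewrite powRD; last by apply/implyP => _; rewrite gt_eqF.
  by rewrite powRr1 // ltW.
have hA : s `^ (1 + 2 * g) = s `^ (1 + g) * s `^ g.
  rewrite -powRD; last by apply/implyP => _; rewrite gt_eqF.
  by congr powR; lra.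
have hrs : r `^ (1 + g) <= s `^ (1 + g).
  apply: (ge0_ler_powR _); rewrite ?nnegrE //; lra.
have P0 : 0 <= s `^ (1 + g) by exact: powR_ge0.
have h1 : 2 * s `^ (1 + g) <= s `^ (1 + g) * s `^ g.
  rewrite mulrC ler_wpM2l //; lra.
have h2 : s * (2 + 2 * C) <= s `^ (1 + g).
  by rewrite hP ler_wpM2l // ltW.
rewrite hA; lra.
Qed.

Lemma dyadic (r e : R) : 0 < r -> r <= e ->
  exists k : nat, 2 ^+ k * r <= e < 2 ^+ k.+1 * r.
Proof.
move=> r0 re.
have ex : exists k, (e < 2 ^+ k.+1 * r).
  exists (Num.bound (e / r)).
  have h1 := archi_boundP (divr_ge0 (le_trans (ltW r0) re) (ltW r0)).
  have h2 : (Num.bound (e / r))%:R <= 2 ^+ (Num.bound (e / r)).+1 :> R.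
    rewrite -natrX ler_nat; apply: ltnW.
    apply: (leq_trans (ltn_expl _ (ltnSn 1))).
    by rewrite leq_exp2l.
  by rewrite -(ltr_pdivrMr _ _ r0); apply: lt_le_trans h1 h2.
case: (ex_minnP ex) => k hk hmin.
exists k; rewrite hk andbT.
case: k hk hmin => [|k] hk hmin; first by rewrite expr0 mul1r.
by rewrite leNgt; apply/negP => /hmin; rewrite ltnn.
Qed.

Lemma geom_bound (c q : R) : 0 <= c -> 0 < q -> q < 1 ->
  (\sum_(k <oo) (c * q ^+ k)%:E <= (c / (1 - q))%:E)%E.
Proof.
move=> c0 q0 q1.
apply: lime_le.
  by apply: is_cvg_nneseries => k _ _; rewrite lee_fin mulr_ge0 // exprn_ge0 // ltW.
apply: nearW => N; rewrite /= sumEFin lee_fin.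
have := @geometric_le_lim R N c q c0.
move=> /(_ q0); rewrite (ger0_norm (ltW q0)) => /(_ q1).
by [].

Qed.
End S.
Section S.
Variables (R : realType) (n : nat).
Local Notation V := 'rV[R]_n.

Lemma lip_local (p : R -> R) x0 : derivable p x0 1 ->
  exists K δ : R, 0 <= K /\ 0 < δ /\
    forall h, `|h| < δ -> `|p (x0 + h) - p x0| <= K * `|h|.
Proof.
move=> /cvg_ex[l hl].
have := (cvgrPdist_lt _ _).1 hl 1 ltr01.
rewrite /= near_withinE => /(_ ltac:(exact: _)).
move=> /nbhs_ballP[δ /= δ0 hδ].
exists (`|l| + 1), δ; split; first by rewrite addr_ge0.
split=> // h hh.
have [->|h0] := eqVneq h 0; first by rewrite addr0 subrr !normr0 mulr0.
have := hδ h; rewrite /ball /= sub0r normrN => /(_ hh h0).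
rewrite /= scaler1 [h + x0]addrC => H1.
have e : p (x0 + h) - p x0 = h * (h^-1 *: (p (x0 + h) - p x0)).
  by rewrite /GRing.scale /= mulrA mulfV // mul1r.
rewrite e normrM mulrC ler_wpM2r //.
have := ler_normD l (h^-1 *: (p (x0 + h) - p x0) - l).
rewrite addrC subrK distrC => H2.
move: H1 H2 => H1 H2; apply: (le_trans H2); rewrite lerD2l; exact: ltW.
Qed.

Lemma lip_global (p : R -> R) x0 : (forall x, 0 <= p x) -> derivable p x0 1 ->
  exists K : R, 0 <= K /\ forall h, - (K * `|h|) <= p (x0 + h) - p x0.
Proof.
move=> p0 /lip_local[K [δ [K0 [δ0 hK]]]].
exists (K + p x0 / δ); split; first by rewrite addr_ge0 // divr_ge0 // ?p0 ?ltW.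
move=> h; have [hd|hd] := ltP `|h| δ.
  have := hK h hd; rewrite ler_norml => /andP[h1 _].
  have : 0 <= p x0 / δ * `|h| by rewrite mulr_ge0 // divr_ge0 // ?p0 ?ltW.
  move: h1; rewrite mulrDl; lra.
have : p x0 <= p x0 / δ * `|h|.
  by rewrite mulrAC ler_pdivlMr // ler_wpM2l ?p0.
have := p0 (x0 + h); have : 0 <= K * `|h| by rewrite mulr_ge0.
rewrite mulrDl; lra.
Qed.

Lemma shiftE (ts : V) (al : 'I_n -> R) u j :
  shiftpt ts al u 0 j = ts 0 j + al j * u 0 j.
Proof. by rewrite /shiftpt !mxE. Qed.

Lemma le_sum_term (f : 'I_n -> R) j : (forall i, 0 <= f i) -> f j <= \sum_i f i.
Proof.
by move=> f0; rewrite (bigD1 j) //= lerDl sumr_ge0.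
Qed.

Lemma eucl_ge0 (u : V) : 0 <= eucl u.
Proof. exact: sqrtr_ge0. Qed.

Lemma eucl_ge (u : V) j : `|u 0 j| <= eucl u.
Proof.
rewrite /eucl -sqrtr_sqr ler_sqrt; last by rewrite sumr_ge0 // => i _; rewrite sqr_ge0.
by apply: (le_sum_term (fun i => u 0 i ^+ 2)) => i; rewrite sqr_ge0.
Qed.

Lemma shift_near (ts : V) al (u : V) e : 0 < e ->
  \forall v \near u, ball (shiftpt ts al u) e (shiftpt ts al v).
Proof.
move=> e0; set S := \sum_i `|al i|.
have S0 : 0 <= S by rewrite sumr_ge0.
apply/nbhs_ballP; exists (e / (1 + S)); first by rewrite /= divr_gt0 //; lra.
move=> v /ballV [_ hv]; apply/ballV; split => // j.
rewrite !shiftE opprD addrACA subrr add0r -mulrBr normrM.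
have := hv j; rewrite ltr_pdivlMr; last lra.
have : `|al j| <= S by apply: (le_sum_term (fun i => `|al i|)).
have := normr_ge0 (u 0 j - v 0 j); have := normr_ge0 (al j).
nra.
Qed.

Section pcont.
Variables (K : Type) (U : set V) (pat : V -> K).

Definition pcont (F : V -> R) := forall u, U u -> forall e, 0 < e ->
  \forall v \near u, U v -> pat v = pat u -> `|F u - F v| < e.

Lemma pcont_cst c : pcont (fun _ => c).
Proof. by move=> u Uu e e0; near=> v => _ _; rewrite subrr normr0. Unshelve. all: by end_near. Qed.

Lemma pcontB F G : pcont F -> pcont G -> pcont (fun v => F v - G v).
Proof.
move=> hF hG u Uu e e0.
have e20 : 0 < e / 2 by rewrite divr_gt0.
apply: filterS2 (hF u Uu _ e20) (hG u Uu _ e20) => v h1 h2 Uv pv.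
have := h1 Uv pv; have := h2 Uv pv.
have -> : F u - G u - (F v - G v) = (F u - F v) - (G u - G v) by ring.
move=> a b; apply: le_lt_trans (ler_normB _ _) _; lra.
Qed.

Lemma pcontMl c F : pcont F -> pcont (fun v => c * F v).
Proof.
move=> hF u Uu e e0.
have e1 : 0 < e / (1 + `|c|) by rewrite divr_gt0 //; have := normr_ge0 c; lra.
apply: filterS (hF u Uu _ e1) => v h Uv pv.
have := h Uv pv; rewrite -mulrBr normrM ltr_pdivlMr; last by have := normr_ge0 c; lra.
have := normr_ge0 c; have := normr_ge0 (F u - F v); nra.
Qed.

Lemma pcont_sum (F : 'I_n -> V -> R) : (forall j, pcont (F j)) ->
  pcont (fun v => \sum_j F j v).
Proof.
move=> hF u Uu e e0.
have e1 : 0 < e / n.+1%:R by rewrite divr_gt0.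
have := @filter_forall _ _ _ (nbhs u) (nbhs_filter u) (fun j => hF j u Uu _ e1).
apply: filterS => v h Uv pv.
rewrite -sumrB; apply: le_lt_trans (ler_norm_sum _ _ _) _.
apply: (@le_lt_trans _ _ (\sum_(j < n) e / n.+1%:R)).
  by apply: ler_sum => j _; apply: ltW; exact: h.
rewrite sumr_const card_ord.
have ht : e / n.+1%:R *+ n.+1 = e by rewrite -mulr_natr divfK // pnatr_eq0.
by rewrite -{2}ht ltr_pMn2l ?divr_gt0.
Qed.

Lemma pcont_expR F : pcont F -> pcont (fun v => expR (F v)).
Proof.
move=> hF u Uu e e0.
have := (cvgrPdist_lt _ _).1 (@continuous_expR R (F u)) e e0.
move=> /(_ ltac:(exact: _)) /nbhs_ballP[η /= η0 hη].
apply: filterS (hF u Uu _ η0) => v h Uv pv.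
exact: (hη (F v) (h Uv pv)).
Qed.

Lemma pcont_H (h : V -> R) (Th : set V) ts al :
  {within Th, continuous h} -> (forall v, U v -> Th (shiftpt ts al v)) ->
  pcont (fun v => h (shiftpt ts al v)).
Proof.
move=> hc UT u Uu e e0.
have := (subspace_continuousP _ _).1 hc _ (UT u Uu).
move=> /cvgrPdist_lt /(_ e e0); rewrite near_withinE.
move=> /nbhs_ballP[δ /= δ0 hδ].
have := @shift_near ts al u δ δ0.
apply: filterS => v b Uv pv.
exact: (hδ _ b (UT v Uv)).
Qed.
End pcont.

Lemma pcont_p (p : R -> R) (ts : V) al (U : set V) j :
  (forall x, x != 0 -> derivable p x 1) ->
  @pcont _ U (fun v : V => [ffun i => shiftpt ts al v 0 i != 0])
    (fun v => p (shiftpt ts al v 0 j)).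
Proof.
move=> dp u Uu e e0.
have [x00|x0n] := eqVneq (shiftpt ts al u 0 j) 0.
  near=> v => Uv pv.
  have := congr1 (fun f : {ffun 'I_n -> bool} => f j) pv; rewrite !ffunE /= x00 eqxx /=.
  by move/negbFE/eqP => ->; rewrite subrr normr0.
have [K [δ [K0 [δ0 hK]]]] := @lip_local p _ (dp _ x0n).
have e1 : 0 < e / (K + 1) by rewrite divr_gt0 //; lra.
have h1 := @shift_near ts al u δ δ0.
have h2 := @shift_near ts al u _ e1.
apply: filterS2 h1 h2 => v b1 b2 _ _.
have := (proj1 (ballV _ _ _ _ _) b1).2 j; have := (proj1 (ballV _ _ _ _ _) b2).2 j.
set x0 := shiftpt ts al u 0 j.
have -> : shiftpt ts al v 0 j = x0 + (shiftpt ts al v 0 j - x0) by ring.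
move: (shiftpt ts al v 0 j - x0) => h.
rewrite !opprD !addrA subrr !sub0r !normrN => c2 c1.
have := hK h c1; rewrite distrC.
move: c2; rewrite ltr_pdivlMr; last lra.
have := normr_ge0 h; nra.
Unshelve. all: by end_near.
Qed.
End S.


Theorem theorem1
  (R : realType) (n : nat)
  (Theta : set 'rV[R]_n) (thstar : 'rV[R]_n)
  (d : measure_display) (Om : measurableType d) (P : probability Om R)
  (TT : set R)
  (H : R -> Om -> 'rV[R]_n -> R)
  (xi : R -> 'I_n -> Om -> R)
  (p : R -> R)
  (alpha : R -> 'I_n -> R)
  (L c0 : R) :
  (* standing assumptions *)
  open Theta -> bounded_set Theta -> Theta thstar ->
  (forall T, TT T -> 0 <= T) ->
  (forall M : R, exists T, TT T /\ M < T) ->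
  (forall T, TT T -> forall th, closure Theta th ->
     measurable_fun setT (fun w => H T w th)) ->
  (forall T, TT T -> forall w, {within closure Theta, continuous (H T w)}) ->
  (forall T, TT T -> forall j, measurable_fun setT (xi T j)) ->
  (forall T, TT T -> forall j w, 0 < xi T j w) ->
  (forall x, 0 <= p x) -> p 0 = 0 ->
  (forall T, TT T -> forall j, alpha T j != 0) ->
  (forall e : R, 0 < e -> exists M : R, forall T, TT T -> M < T ->
     forall j, `|alpha T j| < e) ->
  0 < L -> 0 < c0 ->
  (* [A1] *)
  (exists CL epsL : R, 0 < CL /\ 0 < epsL < 1 /\
     forall r : R, 0 < r -> forall T, TT T ->
       (P (tail_event (fun w => Zfield (H T w) thstar (alpha T))
             (VT Theta thstar (alpha T) r) r epsL)
        <= (CL / r `^ L)%:E)%E) ->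
  (* [A2] *)
  (forall x : R, x != 0 -> derivable p x 1) ->
  (* [A3] *)
  (exists eps : R, 0 < eps /\
     (ereal_sup [set (p x)%:E | x in [set x : R | (`|x| < eps)%R]] < +oo)%E) ->
  (* [A4] *)
  (forall j : 'I_n, thstar 0 j != 0 ->
     {ae P, forall w, forall T, TT T -> `|alpha T j * xi T j w| <= c0}) ->
  (* conclusion *)
  exists CL' epsL' : R, 0 < CL' /\ 0 < epsL' < 1 /\
     forall r : R, 0 < r -> forall T, TT T ->
       (P (tail_event
             (fun w => Zfield (fun th => H T w th - penalty p (fun j => xi T j w) th)%R
                         thstar (alpha T))
             (VT Theta thstar (alpha T) r) r epsL')
        <= (CL' / r `^ L)%:E)%E.
Proof.
move=> oT bT Tts TT0 TTunb Hmeas Hcont ximeas xipos p0 p00 al0 alcvg L0 c00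
  [CL [epsL [CL0 [/andP[eps0 eps1] hA1]]]] dp _ hA4.
have hK : forall j : 'I_n, exists Kj : R, 0 <= Kj /\ (thstar 0 j != 0 ->
   forall h, - (Kj * `|h|) <= p (thstar 0 j + h) - p (thstar 0 j)).
  move=> j; have [tj0|tjn] := eqVneq (thstar 0 j) 0.
    by exists 0; split => //; rewrite tj0 eqxx.
  have [Kj [Kj0 hKj]] := @lip_global R p _ p0 (dp _ tjn).
  by exists Kj; split.
have [Kf hKf] := choice hK.
pose C0 := \sum_j c0 * Kf j.
have C00 : 0 <= C0.
  by rewrite sumr_ge0 // => j _; rewrite mulr_ge0 ?(proj1 (hKf j)) // ltW.
have hae : {ae P, forall w, forall j, thstar 0 j != 0 ->
    forall T, TT T -> `|alpha T j * xi T j w| <= c0}.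
  apply: filter_forall => j.
  have [tj0|tjn] := eqVneq (thstar 0 j) 0.
    by apply: nearW.
  by apply: filterS (hA4 j tjn) => w h _.
case: hae => N [mN PN0 hN].
have goodP w : ~ N w -> forall j, thstar 0 j != 0 ->
    forall T, TT T -> `|alpha T j * xi T j w| <= c0.
  by move=> nN; apply: contrapT => ng; exact: nN (hN w ng).
pose g := (1 - epsL) / 2.
have g0 : 0 < g by rewrite /g; lra.
pose epsL' := (1 + epsL) / 2.
pose r0 := 1 + (2 + 2 * C0) `^ g^-1.
have r01 : 1 <= r0 by rewrite /r0 lerDl powR_ge0.
pose q := (2 `^ L)^-1.
have q0 : 0 < q by rewrite /q invr_gt0 powR_gt0.
have q1 : q < 1 by rewrite /q invf_lt1 ?powR_gt0 // two_powR_gt1.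
have CLq : 0 <= CL / (1 - q) by rewrite divr_ge0 ?ltW //; lra.
pose C' := CL / (1 - q) + r0 `^ L + 1.
have r0L : 0 <= r0 `^ L by exact: powR_ge0.
exists C', epsL'; split; first by rewrite /C'; lra.
split; first by apply/andP; rewrite /epsL'; split; lra.
move=> r r0pos T TT_T.
have clts : closure Theta thstar by exact: subset_closure.
have mB s eps : measurable (tail_event (fun w => Zfield (H T w) thstar (alpha T))
    (VT Theta thstar (alpha T) s) s eps).
  apply: (@meas_sup R n _ _ unit _ (fun _ => tt)).
    move=> u [Uu _]; rewrite /Zfield.
    apply: measurableT_comp; first exact: measurable_realfun.measurable_expR.
    by apply: measurable_realfun.measurable_funB; apply: Hmeas.
  move=> w u Uu.
  apply: (@pcont_expR R n unit _ (fun _ => tt)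
    (fun v => H T w (shiftpt thstar (alpha T) v) - H T w thstar)) => //.
  apply: pcontB; last exact: pcont_cst.
  apply: (@pcont_H R n unit _ _ _ _ _ _ (Hcont T TT_T w)).
  by move=> v [].
pose Zd := (fun w => Zfield (fun th => H T w th - penalty p (fun j => xi T j w) th)
  thstar (alpha T)).
have mA s eps : measurable (tail_event Zd (VT Theta thstar (alpha T) s) s eps).
  apply: (@meas_sup R n _ _ _ _
    (fun v : 'rV[R]_n => [ffun i => shiftpt thstar (alpha T) v 0 i != 0])).
    move=> u [Uu _]; rewrite /Zd /Zfield /penalty.
    apply: measurableT_comp; first exact: measurable_realfun.measurable_expR.
    apply: measurable_realfun.measurable_funB; apply: measurable_realfun.measurable_funB;
      try exact: Hmeas.
      apply: measurable_sum => j.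
      by apply: measurable_realfun.measurable_funM; [exact: ximeas|exact: measurable_cst].
    apply: measurable_sum => j.
    by apply: measurable_realfun.measurable_funM; [exact: ximeas|exact: measurable_cst].
  move=> w u Uu.
  apply: (@pcont_expR R n _ _ _
    (fun v => (H T w (shiftpt thstar (alpha T) v) -
       \sum_j xi T j w * p (shiftpt thstar (alpha T) v 0 j)) -
      (H T w thstar - \sum_j xi T j w * p (thstar 0 j)))) => //.
  apply: pcontB; last exact: pcont_cst.
  apply: pcontB.
    apply: (@pcont_H R n _ _ _ _ _ _ _ (Hcont T TT_T w)).
    by move=> v [].
  apply: pcont_sum => j; apply: pcontMl.
  exact: pcont_p.
have pen w u : ~ N w ->
    - (C0 * eucl u) <= penalty p (fun j => xi T j w) (shiftpt thstar (alpha T) u)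
                    - penalty p (fun j => xi T j w) thstar.
  move=> nNw; have gw := goodP w nNw.
  rewrite /penalty -sumrB /C0 mulr_suml -sumrN; apply: ler_sum => j _.
  rewrite -mulrBr shiftE.
  have [Kj0 hKj] := hKf j.
  have xj0 := xipos T TT_T j w.
  have e0 := @eucl_ge0 R n u.
  have [tj0|tjn] := eqVneq (thstar 0 j) 0.
    rewrite tj0 p00 subr0 add0r.
    apply: (@le_trans _ _ 0).
      by rewrite oppr_le0 mulr_ge0 // mulr_ge0 // ltW.
    by rewrite mulr_ge0 // ltW.
  have hb := hKj tjn (alpha T j * u 0 j).
  have ha := gw j tjn T TT_T.
  apply: le_trans (ler_wpM2l (ltW xj0) hb).
  rewrite normrM.
  have hα : `|alpha T j| * xi T j w <= c0.
    by rewrite -[xi T j w]gtr0_norm // -normrM.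
  have hu := @eucl_ge R n u j.
  have h1 : Kf j * (`|alpha T j| * xi T j w) <= Kf j * c0 by rewrite ler_wpM2l.
  have h2 : Kf j * (`|alpha T j| * xi T j w) * `|u 0 j| <= Kf j * c0 * `|u 0 j|.
    by rewrite ler_wpM2r.
  have h3 : Kf j * c0 * `|u 0 j| <= Kf j * c0 * eucl u.
    by rewrite ler_wpM2l // mulr_ge0 // ltW.
  lra.
pose B k := tail_event (fun w => Zfield (H T w) thstar (alpha T))
  (VT Theta thstar (alpha T) (2 ^+ k * r)) (2 ^+ k * r) epsL.
have incl : r0 <= r -> tail_event Zd (VT Theta thstar (alpha T) r) r epsL'
    `<=` \bigcup_k (B k `|` N).
  move=> rr0 w Aw.
  have [Nw|nNw] := pselect (N w); first by exists 0%N => //; right.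
  have : ((expR (- r `^ (2 - epsL') - 1))%:E <
      ereal_sup [set (Zd w u)%:E | u in VT Theta thstar (alpha T) r])%E.
    by apply: lt_le_trans Aw; rewrite lte_fin ltr_expR; lra.
  move=> /ereal_sup_gt[_ [u [Uu ru] <-]]; rewrite lte_fin => hu.
  have [k /andP[hk1 hk2]] := @dyadic R r (eucl u) r0pos ru.
  exists k => //; left.
  have hp := pen w u nNw.
  move: hu; rewrite /Zd /Zfield ltr_expR => hu.
  rewrite /B /tail_event /=.
  apply: le_trans (ereal_sup_ubound _); last by exists u.
  rewrite lee_fin ler_expR.
  set s := 2 ^+ k * r.
  have k1 : 1 <= 2 ^+ k :> R by rewrite exprn_ege1 // ler1n.
  have rs : r <= s by rewrite /s; nra.
  have ha := @pow_arith R C0 g r s g0 C00 rr0 rs.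
  have e1 : 2 - epsL' = 1 + g by rewrite /epsL' /g; lra.
  have e2 : 2 - epsL = 1 + 2 * g by rewrite /g; lra.
  rewrite e2; rewrite e1 in hu.
  have he : eucl u < 2 * s by rewrite /s mulrA -exprS.
  have hc : C0 * eucl u <= C0 * (2 * s) by rewrite ler_wpM2l // ltW.
  lra.
have rL0 : 0 < r `^ L by rewrite powR_gt0.
have hBk k : (P (B k `|` N) <= (CL / r `^ L * q ^+ k)%:E)%E.
  have PN : (P N = 0)%E := PN0.
  apply: le_trans (measureU2 P (mB _ _) mN) _.
  rewrite [X in (_ + X <= _)%E](_ : _ = 0%E); last exact: PN0.
  rewrite adde0.
  have s0 : 0 < 2 ^+ k * r by rewrite mulr_gt0 // exprn_gt0.
  apply: le_trans (hA1 _ s0 T TT_T) _; rewrite lee_fin.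
  have e2k : (2 ^+ k : R) `^ L = (2 `^ L) ^+ k.
    rewrite -(@powR_mulrn R 2 k) // -(@powR_mulrn R (2 `^ L) k) ?powR_ge0 //.
    by rewrite -!powRrM mulrC.
  rewrite (powRM _ (exprn_ge0 _ _) (ltW r0pos)) // e2k.
  rewrite /q exprVn invfM le_eqVlt; apply/orP; left; apply/eqP.
  ring.
have [rr0|rr0] := leP r0 r.
  have h1 := measure_sigma_subadditive P (fun k => measurableU _ _ (mB _ _) mN)
    (mA r epsL') (incl rr0).
  apply: le_trans h1 _.
  apply: le_trans (@lee_nneseries R _ (fun k => (CL / r `^ L * q ^+ k)%:E) xpredT 0%N
    (fun _ _ _ => measure_ge0 _ _) (fun k _ => hBk k)) _.
  have c0' : 0 <= CL / r `^ L by rewrite divr_ge0 // ltW.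
  apply: le_trans (@geom_bound R _ _ c0' q0 q1) _.
  rewrite lee_fin mulrAC ler_wpM2r ?invr_ge0 ?ltW // /C'; lra.
apply: le_trans (probability_le1 P (mA r epsL')) _.
rewrite lee_fin ler_pdivlMr // mul1r.
have : r `^ L <= r0 `^ L.
  by apply: (ge0_ler_powR (ltW L0)); rewrite ?nnegrE ?ltW //; lra.
rewrite /C'; lra.
Qed.
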